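(* Let $\mathbb{K}$ be a field of characteristic zero, let $p,q\in\mathbb{Z}^n_{\ge0}$ be nonzero vectors and let $\beta,\gamma\in\mathbb{K}^n$ be non-proportional vectors such that the derivations $\Delta^p_\beta$ and $\Delta^q_\gamma$ of $\mathbb{K}[x_1,\ldots,x_n]$ generate a finite dimensional Lie algebra. Let $r$ and $s$ be the smallest non-negative integers such that $\langle\beta,rp+q\rangle=0$ and $\langle\gamma,p+sq\rangle=0$. Then $r=0$ or $s=0$.
   Context: For $p\in\mathbb{Z}^n_{\ge0}$ and $\beta\in\mathbb{K}^n$, $\Delta^p_\beta:=x_1^{p_1}\cdots x_n^{p_n}\sum_{j=1}^n\beta_jx_j\partial_j$, where $\partial_j=\partial/\partial x_j$. $\langle\beta,u\rangle:=\sum_i\beta_iu_i$. The Lie bracket is the commutator of derivations. *)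

(* Defs.v *)
From HB Require Import structures.
From mathcomp Require Import all_boot all_order all_algebra.
From mathcomp Require Import mpoly.
Set Implicit Arguments. Unset Strict Implicit. Unset Printing Implicit Defensive.
Import GRing.Theory.
Local Open Scope ring_scope.

Definition pairing (K : fieldType) (n : nat) (beta : 'I_n -> K) (u : 'X_{1..n}) : K :=
  \sum_(i < n) beta i * (u i)%:R.

Definition Delta (K : fieldType) (n : nat) (p : 'X_{1..n}) (beta : 'I_n -> K)
    (f : {mpoly K[n]}) : {mpoly K[n]} :=
  'X_[p] * \sum_(j < n) (beta j *: ('X_j * mderiv j f)).

Definition lie_bracket (K : fieldType) (n : nat) (D E : {mpoly K[n]} -> {mpoly K[n]})
    (f : {mpoly K[n]}) : {mpoly K[n]} :=
  D (E f) - E (D f).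

Inductive lie_word : Type :=
| LGen1 : lie_word
| LGen2 : lie_word
| LBr : lie_word -> lie_word -> lie_word.

Fixpoint eval_word (K : fieldType) (n : nat) (D1 D2 : {mpoly K[n]} -> {mpoly K[n]})
    (w : lie_word) : {mpoly K[n]} -> {mpoly K[n]} :=
  match w with
  | LGen1 => D1
  | LGen2 => D2
  | LBr w1 w2 => lie_bracket (eval_word D1 D2 w1) (eval_word D1 D2 w2)
  end.

(* The Lie algebra generated by D1, D2 is the K-span of all iterated brackets;
   it is finite dimensional iff this span lies in the span of finitely many maps. *)
Definition gen_lie_findim (K : fieldType) (n : nat)
    (D1 D2 : {mpoly K[n]} -> {mpoly K[n]}) : Prop :=
  exists (k : nat) (B : 'I_k -> ({mpoly K[n]} -> {mpoly K[n]})),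
    forall w : lie_word, exists c : 'I_k -> K,
      forall f, eval_word D1 D2 w f = \sum_(i < k) c i *: B i f.

Definition proportional (K : fieldType) (n : nat) (beta gamma : 'I_n -> K) : Prop :=
  (exists c : K, forall i, beta i = c * gamma i) \/
  (exists c : K, forall i, gamma i = c * beta i).

Definition mnm_scale (n : nat) (k : nat) (m : 'X_{1..n}) : 'X_{1..n} :=
  [multinom (k * m i)%N | i < n].

(* Main.v *)
Require Import Defs.
From HB Require Import structures.
From mathcomp Require Import all_boot all_order all_algebra.
From mathcomp Require Import mpoly.
From mathcomp Require Import ring zify.
Set Implicit Arguments. Unset Strict Implicit. Unset Printing Implicit Defensive.
Import GRing.Theory.
Local Open Scope ring_scope.

Section S.
Variables (K : fieldType) (n : nat).
Implicit Types (d e : 'I_n -> K) (m u : 'X_{1..n}) (f g : {mpoly K[n]}).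

Lemma pairingD d m1 m2 : pairing d (m1 + m2)%MM = pairing d m1 + pairing d m2.
Proof. by rewrite /pairing -big_split; apply: eq_bigr => i _; rewrite mnmDE natrD mulrDr. Qed.

Lemma pairing_scale d k m : pairing d (mnm_scale k m) = k%:R * pairing d m.
Proof. rewrite /pairing mulr_sumr; apply: eq_bigr => i _; rewrite /mnm_scale mnmE natrM; ring. Qed.

Lemma pairingU d j : pairing d U_(j)%MM = d j.
Proof.
rewrite /pairing (bigD1 j) //= mnm1E eqxx mulr1 big1 ?addr0 // => i /negbTE ij.
by rewrite mnm1E eq_sym ij mulr0.
Qed.

Lemma pairing_lin x y d e m :
  pairing (fun j => x * d j + y * e j) m = x * pairing d m + y * pairing e m.
Proof.
rewrite /pairing !mulr_sumr -big_split; apply: eq_bigr => i _ /=; ring.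
Qed.

Lemma DeltaX m d u : Delta m d 'X_[u] = pairing d u *: 'X_[m + u].
Proof.
rewrite /Delta mpolyXD scalerAr; congr (_ * _).
rewrite /pairing scaler_suml; apply: eq_bigr => j _.
rewrite mderivX -scalerAr scalerA.
case: (posnP (u j)) => [->|hu]; first by rewrite !mulr0 !scale0r.
congr (_ *: _); rewrite -mpolyXD addmC submK //.
apply/mnm_lepP => i; rewrite mnm1E; case: eqP => [<-|] //.
Qed.

Lemma DeltaD m d f g : Delta m d (f + g) = Delta m d f + Delta m d g.
Proof.
rewrite /Delta -mulrDr -big_split; congr (_ * _); apply: eq_bigr => j _.
by rewrite mderivD mulrDr scalerDr.
Qed.

Lemma DeltaZ m d c f : Delta m d (c *: f) = c *: Delta m d f.
Proof.
rewrite /Delta scalerAr scaler_sumr; congr (_ * _); apply: eq_bigr => j _.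
by rewrite mderivZ -scalerAr !scalerA mulrC.
Qed.

Definition islin (F : {mpoly K[n]} -> {mpoly K[n]}) :=
  (forall f g, F (f + g) = F f + F g) /\ (forall c f, F (c *: f) = c *: F f).

Lemma islin_ext F G : islin F -> islin G -> (forall u, F 'X_[u] = G 'X_[u]) ->
  forall f, F f = G f.
Proof.
move=> [FD FZ] [GD GZ] h f; rewrite (mpolyE f).
elim: (msupp f) => [|x s IH].
  by rewrite big_nil -(scale0r 0) FZ GZ !scale0r.
by rewrite !big_cons FD GD IH FZ GZ h.
Qed.

Lemma islin_Delta m d : islin (Delta m d).
Proof. by split; [exact: DeltaD | exact: DeltaZ]. Qed.

Lemma islin_br F G : islin F -> islin G -> islin (lie_bracket F G).
Proof.
move=> [FD FZ] [GD GZ]; split=> [f g|c f]; rewrite /lie_bracket.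
  by rewrite FD GD FD GD; ring.
by rewrite FZ GZ FZ GZ scalerBr.
Qed.

Definition brv m d m' e := fun j => pairing d m' * e j - pairing e m * d j.

Lemma pairing_brv m d m' e u :
  pairing (brv m d m' e) u = pairing d m' * pairing e u - pairing e m * pairing d u.
Proof.
rewrite /pairing !mulr_sumr -sumrB; apply: eq_bigr => i _; rewrite /brv /pairing; ring.
Qed.

Lemma bracketD m d m' e f :
  lie_bracket (Delta m d) (Delta m' e) f = Delta (m + m') (brv m d m' e) f.
Proof.
apply: islin_ext; [exact/islin_br/islin_Delta/islin_Delta | exact: islin_Delta|].
move=> u; rewrite /lie_bracket !DeltaX !DeltaZ !DeltaX !scalerA.
rewrite [(m' + (m + u))%MM]addmA [(m' + m)%MM]addmC -addmA -scalerBl.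
congr (_ *: _).
rewrite pairing_brv !pairingD; ring.
Qed.


Lemma no_findim (D1 D2 : {mpoly K[n]} -> {mpoly K[n]}) (W : nat -> lie_word)
  (m : nat -> 'X_{1..n}) :
  (forall t, exists de, (forall f, eval_word D1 D2 (W t) f = Delta (m t) de f)
     /\ exists j, de j != 0) ->
  injective m -> ~ gen_lie_findim D1 D2.
Proof.
move=> hW minj [k [B hB]].
have [C hC] : exists C : 'I_k.+1 -> 'I_k -> K, forall t : 'I_k.+1, forall f,
    eval_word D1 D2 (W t) f = \sum_(i < k) C t i *: B i f.
  exact: (fin_all_exists (fun t : 'I_k.+1 => hB (W t))).
pose M := \matrix_(t < k.+1, i < k) C t i.
have hker : kermx M != 0.
  rewrite kermx_eq0 /row_free; apply/negP => /eqP hr.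
  by have := rank_leq_col M; rewrite hr ltnn.
have [i0 hi0] : exists i, row i (kermx M) != 0.
  case: (pickP (fun i => row i (kermx M) != 0)) => [i ht|h]; first by exists i.
  exfalso; apply: (negP hker); apply/eqP/row_matrixP => i; rewrite row0.
  exact/eqP/negbFE/h.
set v := row i0 (kermx M) in hi0.
have hvM : v *m M = 0 by rewrite /v -row_mul mulmx_ker row0.
have [t0 ht0] : exists t, v 0 t != 0.
  case: (pickP (fun t => v 0 t != 0)) => [t ht|h]; first by exists t.
  exfalso; apply: (negP hi0); apply/eqP/rowP => j; rewrite [RHS]mxE.
  exact/eqP/negbFE/h.
have hv : forall i, \sum_t v 0 t * C t i = 0.
  move=> i; transitivity ((v *m M) 0 i); last by rewrite hvM mxE.
  by rewrite mxE; apply: eq_bigr => t _; congr (_ * _); rewrite /M mxE.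
have [de0 [h0 [j0 hj0]]] := hW t0.
pose P := \sum_(t < k.+1) v 0 t *: eval_word D1 D2 (W t) 'X_[U_(j0)].
have P0 : P = 0.
  rewrite /P (eq_bigr (fun t => \sum_(i < k) (v 0 t * C t i) *: B i 'X_[U_(j0)])); last first.
    by move=> t _; rewrite hC scaler_sumr; apply: eq_bigr => i _; rewrite scalerA.
  rewrite exchange_big big1 // => i _; rewrite -scaler_suml hv scale0r //.
have : P@_(m t0 + U_(j0))%MM = v 0 t0 * de0 j0.
  rewrite /P raddf_sum (bigD1 t0) //= h0 DeltaX pairingU !mcoeffZ mcoeffX eqxx mulr1.
  rewrite big1 ?addr0 // => t ht; have [de1 [h1 _]] := hW t; rewrite h1 DeltaX pairingU !mcoeffZ mcoeffX.
  case: eqP => [/addIm /minj /val_inj htt|]; last by rewrite !mulr0.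
  by rewrite htt eqxx in ht.
by rewrite P0 mcoeff0 => /esym /eqP; rewrite mulf_eq0 (negbTE ht0) (negbTE hj0).
Qed.

Fixpoint wk (Y B : lie_word) k := match k with 0%N => B | k'.+1 => LBr Y (wk Y B k') end.

Lemma mnm_scale0 m0 m : (m0 + mnm_scale 0 m)%MM = m0.
Proof. by apply/mnmP => i; rewrite mnmDE /mnm_scale mnmE mul0n addn0. Qed.

Lemma mnm_scaleS m0 m k : (m + (m0 + mnm_scale k m))%MM = (m0 + mnm_scale k.+1 m)%MM.
Proof. apply/mnmP => i; rewrite !mnmDE /mnm_scale !mnmE mulSn; lia. Qed.

Lemma chain (D1 D2 : {mpoly K[n]} -> {mpoly K[n]}) Y B mY dY mB dB :
  (forall f, eval_word D1 D2 Y f = Delta mY dY f) ->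
  (forall f, eval_word D1 D2 B f = Delta mB dB f) ->
  (forall k, pairing dY (mB + mnm_scale k mY)%MM != 0) ->
  forall k, exists de : 'I_n -> K,
    (forall f, eval_word D1 D2 (wk Y B k) f = Delta (mB + mnm_scale k mY)%MM de f) /\
    exists x y, y != 0 /\ forall j, de j = x * dY j + y * dB j.
Proof.
move=> hY hB hnz; elim=> [|k [de [hde [x [y [hy hxy]]]]]].
  exists dB; split=> [f|]; first by rewrite mnm_scale0 hB.
  by exists 0, 1; split=> [|j]; [exact: oner_neq0 | rewrite mul0r mul1r add0r].
exists (brv mY dY (mB + mnm_scale k mY)%MM de); split=> [f|].
  rewrite /= /lie_bracket !hY !hde -mnm_scaleS.
  exact: (bracketD mY dY (mB + mnm_scale k mY)%MM de f).
exists (pairing dY (mB + mnm_scale k mY)%MM * x - pairing de mY).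
exists (pairing dY (mB + mnm_scale k mY)%MM * y); split.
  by rewrite mulf_neq0.
by move=> j; rewrite /brv hxy; ring.
Qed.

End S.
Lemma indep (K : fieldType) (n : nat) (beta gamma : 'I_n -> K) :
  ~ proportional beta gamma -> forall X Y, (X != 0) || (Y != 0) ->
  exists j, X * beta j + Y * gamma j != 0.
Proof.
move=> hnp X Y hXY.
case: (pickP (fun j => X * beta j + Y * gamma j != 0)) => [j hj|h]; first by exists j.
exfalso; apply: hnp.
have h0 : forall j, X * beta j + Y * gamma j = 0 by move=> j; apply/eqP/negbFE/h.
case: (eqVneq X 0) => [X0|Xn].
  have Yn : Y != 0 by move: hXY; rewrite X0 eqxx.
  right; exists 0 => j; move: (h0 j); rewrite X0 mul0r add0r => /eqP.
  by rewrite mulf_eq0 (negbTE Yn) /= => /eqP.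
left; exists (- Y / X) => j; apply: (mulfI Xn).
rewrite mulrA [X * (_ / _)]mulrC divfK // mulNr; apply/eqP; rewrite -addr_eq0; exact/eqP/h0.
Qed.

Lemma natr_neq0 (K : fieldType) (hK : [pchar K] =i pred0) (N : nat) :
  (0 < N)%N -> N%:R != 0 :> K.
Proof. by move=> hN; rewrite ((pcharf0P K).1 hK N) -lt0n. Qed.

Unset Implicit Arguments.

Theorem lemma6 (K : fieldType) (n : nat) (hK : [pchar K] =i pred0)
    (p q : 'X_{1..n}) (hp : p != 0%MM) (hq : q != 0%MM)
    (beta gamma : 'I_n -> K) (hnp : ~ proportional beta gamma)
    (hfin : gen_lie_findim (Delta p beta) (Delta q gamma))
    (r s : nat)
    (hr : pairing beta (mnm_scale r p + q)%MM = 0)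
    (hrmin : forall r' : nat, pairing beta (mnm_scale r' p + q)%MM = 0 -> (r <= r')%N)
    (hs : pairing gamma (p + mnm_scale s q)%MM = 0)
    (hsmin : forall s' : nat, pairing gamma (p + mnm_scale s' q)%MM = 0 -> (s <= s')%N) :
  r = 0%N \/ s = 0%N.
Proof.
case: (posnP r) => [->|r0]; first by left.
case: (posnP s) => [->|s0]; first by right.
exfalso.
set a := pairing beta p; set b := pairing beta q.
set c := pairing gamma p; set d := pairing gamma q.
have hb' : pairing beta (mnm_scale 0 p + q)%MM = b.
  by rewrite pairingD pairing_scale mul0r add0r.
have hc' : pairing gamma (p + mnm_scale 0 q)%MM = c.
  by rewrite mnm_scale0.
have bn : b != 0.
  by apply/eqP => hb0; have := hrmin 0%N; rewrite hb' hb0 => /(_ erefl); rewrite leqn0 => /eqP r00; rewrite r00 in r0.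
have cn : c != 0.
  by apply/eqP => hc0; have := hsmin 0%N; rewrite hc' hc0 => /(_ erefl); rewrite leqn0 => /eqP s00; rewrite s00 in s0.
have hb : b = - (r%:R * a).
  by apply/eqP; rewrite -addr_eq0 addrC; move: hr; rewrite pairingD pairing_scale => ->.
have hc : c = - (s%:R * d).
  by apply/eqP; rewrite -addr_eq0; move: hs; rewrite pairingD pairing_scale => ->.
have an : a != 0 by apply: contraNneq bn => a0; rewrite hb a0 mulr0 oppr0.
have dn : d != 0 by apply: contraNneq cn => d0; rewrite hc d0 mulr0 oppr0.
set dY := brv p beta q gamma.
have hY : forall f, eval_word (Delta p beta) (Delta q gamma) (LBr LGen1 LGen2) f
    = Delta (p + q)%MM dY f.
  by move=> f; rewrite /= bracketD.
have pY : forall u, pairing dY u = b * pairing gamma u - c * pairing beta u.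
  by move=> u; rewrite pairing_brv.
have [i0 hi0] : exists i, p i != 0%N.
  case: (pickP (fun i => p i != 0%N)) => [i hi|h]; first by exists i.
  by move: hp; rewrite (_ : p = 0%MM) ?eqxx // ; apply/mnmP => i; rewrite mnm0E; apply/eqP/negbFE/h.
have minj : forall m0 : 'X_{1..n}, injective (fun t : nat => (m0 + mnm_scale t (p + q))%MM).
  move=> m0 t1 t2 /mnmP /(_ i0); rewrite !mnmDE /mnm_scale !mnmE.
  move: hi0; set P := p i0; set Q := q i0 => hP; nia.
have [le_rs|lt_sr] := leqP r s.
  have [e hse] : exists e, s = (r + e)%N by exists (s - r)%N; rewrite subnKC.
  have hnz : forall k, pairing dY (p + mnm_scale k (p + q))%MM != 0.
    move=> k; rewrite pY !pairingD !pairing_scale !pairingD -/a -/b -/c -/d.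
    have -> : b * (c + k%:R * (c + d)) - c * (a + k%:R * (a + b))
      = a * d * ((r * (r + e) + r + e + k * e)%N)%:R.
      rewrite hb hc hse !natrD !natrM !natrD; ring.
    by rewrite !mulf_neq0 // natr_neq0 //; lia.
  have hch := chain hY (B := LGen1) (fun f => erefl) hnz.
  apply: (no_findim (W := wk (LBr LGen1 LGen2) LGen1) _ (minj p) hfin) => t.
  have [de [hde [x [y [hy hxy]]]]] := hch t.
  exists de; split=> //.
  have hXY : (y - x * c != 0) || (x * b != 0).
    case: (eqVneq x 0) => [->|xn]; first by rewrite mul0r subr0 hy.
    by rewrite mulf_neq0 ?orbT.
  have [j hj] := indep hnp hXY.
  by exists j; rewrite hxy /dY /brv -/b -/c; move: hj; congr (_ != _); ring.
have [e hse] : exists e, r = (s + e.+1)%N by exists (r - s.+1)%N; lia.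
have hnz : forall k, pairing dY (q + mnm_scale k (p + q))%MM != 0.
  move=> k; rewrite pY !pairingD !pairing_scale !pairingD -/a -/b -/c -/d.
  have -> : b * (d + k%:R * (c + d)) - c * (b + k%:R * (a + b))
    = - (a * d * (((s + e.+1) * (1 + s) + k * e.+1)%N)%:R).
    rewrite hb hc hse !natrD !natrM !natrD; ring.
  by rewrite oppr_eq0 !mulf_neq0 // natr_neq0 //; lia.
have hch := chain hY (B := LGen2) (fun f => erefl) hnz.
apply: (no_findim (W := wk (LBr LGen1 LGen2) LGen2) _ (minj q) hfin) => t.
have [de [hde [x [y [hy hxy]]]]] := hch t.
exists de; split=> //.
have hXY : (- (x * c) != 0) || (x * b + y != 0).
  case: (eqVneq x 0) => [->|xn]; first by rewrite !mul0r add0r hy orbT.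
  by rewrite oppr_eq0 mulf_neq0.
have [j hj] := indep hnp hXY.
by exists j; rewrite hxy /dY /brv -/b -/c; move: hj; congr (_ != _); ring.
Qed.
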